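(* Let $S$ be a simple restricted $\mathfrak{D}$-module with central charge $c$ and level $\ell \neq 0$. Assume that $m_S=2n_S>0$. If $r_S=-\infty$, then $c=1$. Moreover, $S= K^{\mathfrak{D}}$ and $K$ is a simple $\mathfrak{h}$-module.
   Context: $\mathfrak{D}$ is the mirror Heisenberg-Virasoro algebra with basis $\{d_m, h_r, \mathbf{c}_1, \mathbf{c}_2 : m\in\mathbb{Z}, r\in\frac12+\mathbb{Z}\}$ and brackets $[d_m,d_n]=(m-n)d_{m+n}+\delta_{m+n,0}\frac{m^3-m}{12}\mathbf{c}_1$, $[d_m,h_r]=-rh_{m+r}$, $[h_r,h_s]=r\delta_{r+s,0}\mathbf{c}_2$, with $\mathbf{c}_1,\mathbf{c}_2$ central. $\mathfrak{h}=\bigoplus_{r\in\frac12+\mathbb{Z}}\mathbb{C}h_r\oplus\mathbb{C}\mathbf{c}_2$ is the twisted Heisenberg subalgebra. A module is restricted if every vector is annihilated by $d_i$ and $h_{i+\frac12}$ for all sufficiently large $i$; central charge $c$ / level $\ell$ means $\mathbf{c}_1$ / $\mathbf{c}_2$ acts as $c$ / $\ell$. For a simple restricted $\mathfrak{D}$-module $S$ of level $\ell\neq0$ define: $S(r)=\{v\in S: h_{r+i+\frac12}v=0\ \forall i\ge0\}$, $n_S=\min\{r\in\mathbb{Z}: S(r)\neq0\}$, $W_0=S(n_S)$; $U(r)=\{v\in W_0: d_{r+i}v=0\ \forall i\ge0\}$, $m_S=\min\{r\in\mathbb{Z}:U(r)\neq0\}$, $U_0=U(m_S)$. Define operators on $S$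 by $L_n=\frac{1}{2\ell}\sum_{k\in\mathbb{Z}+\frac12}h_{n-k}h_k$ for $n\neq0$, $L_0=\frac{1}{2\ell}\sum_{k\in\mathbb{Z}+\frac12}h_{-|k|}h_{|k|}+\frac1{16}$, and $d'_n=d_n-L_n$ ($n\in\mathbb{Z}$); these $d'_n$ commute with all $h_r$. Let $Y_n=\bigcap_{p\ge n}\{v\in U_0: d'_pv=0\}$, $r_S=\min\{n\in\mathbb{Z}: Y_n\neq0\}$, with $r_S=-\infty$ if $Y_n\neq0$ for all $n$; $K_0=Y_{r_S}$ (for $r_S=-\infty$ this means $K_0=\{v\in U_0: d'_pv=0\ \forall p\in\mathbb{Z}\}$), and $K=U(\mathfrak{h})K_0$. For an $\mathfrak{h}$-module $H$ on which $\mathbf{c}_2$ acts as $\ell\neq0$ (restricted), $H^{\mathfrak{D}}$ denotes the $\mathfrak{D}$-module structure on $H$ given by $d_n\mapsto L_n$, $h_r\mapsto h_r$, $\mathbf{c}_1\mapsto1$, $\mathbf{c}_2\mapsto\ell$. *)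

(* Defs.v *)
From HB Require Import structures.
From mathcomp Require Import all_boot all_order all_algebra.
From mathcomp Require Import reals complex.
From Stdlib Require Import ClassicalEpsilon.
Set Implicit Arguments. Unset Strict Implicit. Unset Printing Implicit Defensive.
Import Order.TTheory GRing.Theory Num.Theory.
Local Open Scope ring_scope.

(* Convention: half-integer indices r in 1/2 + Z are encoded by the integer
   a with r = a + 1/2.  Thus [h a] denotes the operator h_{a + 1/2}. *)

Section MirrorHV.
Variables (R : realType) (V : lmodType R[i]).
Variables (d h : int -> V -> V) (c ell : R[i]).

Definition half : R[i] := 2^-1.

Definition hidx (a : int) : R[i] := a%:~R + half.

(* V, with operators d_m (m in Z) and h_{a+1/2} (a in Z), is a module over the
   mirror Heisenberg-Virasoro algebra with c1 acting as c and c2 as ell. *)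
Definition is_D_module : Prop :=
  (forall m a u w, d m (a *: u + w) = a *: d m u + d m w) /\
  (forall k a u w, h k (a *: u + w) = a *: h k u + h k w) /\
  (forall m n v, d m (d n v) - d n (d m v) =
      (m - n)%:~R *: d (m + n) v +
      (if m + n == 0 then (((m ^+ 3 - m)%:~R / 12%:R) * c) *: v else 0)) /\
  (forall m k v, d m (h k v) - h k (d m v) = - hidx k *: h (m + k) v) /\
  (forall k j v, h k (h j v) - h j (h k v) =
      (if hidx k + hidx j == 0 then (hidx k * ell) *: v else 0)).

Definition restricted : Prop :=
  forall v, exists N : int, forall i, N <= i -> d i v = 0 /\ h i v = 0.

Definition subspace (W : V -> Prop) : Prop :=
  W 0 /\ forall a u w, W u -> W w -> W (a *: u + w).

Definition simple_D : Prop :=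
  (exists v : V, v <> 0) /\
  forall W, subspace W ->
    (forall n v, W v -> W (d n v)) -> (forall k v, W v -> W (h k v)) ->
    (forall v, W v -> v = 0) \/ (forall v, W v).

Definition Sr (r : int) (v : V) : Prop := forall i : nat, h (r + i%:Z) v = 0.

Definition Ur (nS r : int) (v : V) : Prop :=
  Sr nS v /\ forall i : nat, d (r + i%:Z) v = 0.

Definition hbound (v : V) : int :=
  epsilon (inhabits 0) (fun N : int => forall j, N <= j -> h j v = 0).

(* window [-M, M) of integer summation indices, M large enough that every
   omitted term of the (finitely supported) sums below vanishes *)
Definition win (n : int) (v : V) : nat := (absz (hbound v) + absz n)%N.

(* L_n, n <> 0 : (1/2ell) sum_{k in Z+1/2} h_{n-k} h_k ;
   with k = a + 1/2, n - k = (n - 1 - a) + 1/2.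
   L_0 : (1/2ell) sum_k h_{-|k|} h_{|k|} + 1/16 ;
   with k = a + 1/2: |k| is index (a if a >= 0 else -a-1), -|k| is index
   (-a-1 if a >= 0 else a). *)
Definition Lop (n : int) (v : V) : V :=
  let M := win n v in
  if n != 0 then
    (2%:R * ell)^-1 *:
      \sum_(i < (M + M)%N) h (n - 1 - (i%:Z - M%:Z)) (h (i%:Z - M%:Z) v)
  else
    (2%:R * ell)^-1 *:
      \sum_(i < (M + M)%N)
        (let a := i%:Z - M%:Z in
         if 0 <= a then h (- a - 1) (h a v) else h a (h (- a - 1) v))
    + (16%:R)^-1 *: v.

Definition dprime (n : int) (v : V) : V := d n v - Lop n v.

Definition K0 (nS mS : int) (v : V) : Prop :=
  Ur nS mS v /\ forall p, dprime p v = 0.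

Definition Yn (nS mS n : int) (v : V) : Prop :=
  Ur nS mS v /\ forall p, n <= p -> dprime p v = 0.

(* K = U(h) K_0 : the smallest h-stable subspace containing K_0 *)
Definition Kmod (nS mS : int) (v : V) : Prop :=
  forall W, subspace W -> (forall k u, W u -> W (h k u)) ->
    (forall u, K0 nS mS u -> W u) -> W v.

Definition simple_h (K : V -> Prop) : Prop :=
  subspace K /\ (forall k v, K v -> K (h k v)) /\
  (exists v, K v /\ v <> 0) /\
  forall W, subspace W -> (forall v, W v -> K v) ->
    (forall k v, W v -> W (h k v)) ->
    (forall v, W v -> v = 0) \/ (forall v, K v -> W v).

End MirrorHV.

(* Main.v *)
Require Import Defs.
From HB Require Import structures.
From mathcomp Require Import all_boot all_order all_algebra.
From mathcomp Require Import reals complex.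
From mathcomp Require Import ring zify.
From Stdlib Require Import ClassicalEpsilon.
Set Implicit Arguments. Unset Strict Implicit. Unset Printing Implicit Defensive.
Import Order.TTheory GRing.Theory Num.Theory.
Local Open Scope ring_scope.

Section Gen.
Variables (R : realType) (V : lmodType R[i]).

Definition linP (f : V -> V) := forall a u w, f (a *: u + w) = a *: f u + f w.

Lemma lin0 f : linP f -> f 0 = 0.
Proof. move=> H; have := H 1 0 0; rewrite !scale1r !addr0.
by move=> /(congr1 (fun x => x - f 0)); rewrite subrr addrK => <-. Qed.
Lemma linD f : linP f -> forall u w, f (u + w) = f u + f w.
Proof. by move=> H u w; have := H 1 u w; rewrite !scale1r. Qed.
Lemma linZ f : linP f -> forall a u, f (a *: u) = a *: f u.
Proof. by move=> H a u; rewrite -[a *: u]addr0 H lin0 // addr0. Qed.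
Lemma linN f : linP f -> forall u, f (- u) = - f u.
Proof. by move=> H u; rewrite -scaleN1r linZ // scaleN1r. Qed.
Lemma linB f : linP f -> forall u w, f (u - w) = f u - f w.
Proof. by move=> H u w; rewrite linD // linN. Qed.
Lemma linS f : linP f -> forall n (F : 'I_n -> V), f (\sum_(i < n) F i) = \sum_(i < n) f (F i).
Proof.
move=> H n F; elim/big_rec2: _ => [|i x y _ <-]; first exact: lin0.
by rewrite linD.
Qed.

Definition isum (lo : int) (n : nat) (f : int -> V) := \sum_(i < n) f (lo + i%:Z).

Lemma isumSr lo n f : isum lo n.+1 f = isum lo n f + f (lo + n%:Z).
Proof. by rewrite /isum big_ord_recr. Qed.
Lemma isumSl lo n f : isum lo n.+1 f = f lo + isum (lo + 1) n f.
Proof.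
rewrite /isum big_ord_recl addr0; congr (_ + _); apply: eq_bigr => i _.
congr f; rewrite /=; unfold bump; simpl; lia.
Qed.

Lemma isum_right lo n f j : (forall a, lo + n%:Z <= a -> f a = 0) ->
  isum lo (n + j) f = isum lo n f.
Proof.
move=> H; elim: j => [|j IH]; first by rewrite addn0.
by rewrite addnS isumSr IH H ?addr0 //; lia.
Qed.

Lemma isum_left lo n f j : (forall a, a < lo -> f a = 0) ->
  isum (lo - j%:Z) (j + n) f = isum lo n f.
Proof.
move=> H; elim: j => [|j IH]; first by rewrite subr0 add0n.
rewrite addSn isumSl (H (lo - j.+1%:Z)); last by lia.
have -> : lo - j.+1%:Z + 1 = lo - j%:Z by lia.
by rewrite add0r IH.
Qed.

Lemma isum_win lo n f lo' n' : (forall a, a < lo \/ lo + n%:Z <= a -> f a = 0) ->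
  lo' <= lo -> lo + n%:Z <= lo' + n'%:Z -> isum lo' n' f = isum lo n f.
Proof.
move=> H h1 h2.
have -> : lo' = lo - (`|lo - lo'|%N)%:Z by lia.
have -> : n' = (`|lo - lo'| + (n + (n' - `|lo - lo'| - n)))%N by lia.
rewrite isum_left; last by move=> a ha; apply: H; left.
by rewrite isum_right // => a ha; apply: H; right.
Qed.

Definition zw (M : nat) f := isum (- M%:Z) (M + M) f.
Definition suppK (f : int -> V) (K : nat) :=
  forall a, a < - K%:Z \/ K%:Z <= a -> f a = 0.

Lemma zw_eqK f K M : suppK f K -> (K <= M)%N -> zw M f = zw K f.
Proof.
move=> H hM; rewrite /zw (@isum_win (- K%:Z) (K + K)) //.
- by move=> a [ha|ha]; apply: H; [left|right]; lia.
- by lia.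
- by lia.
Qed.

Lemma zw_eq f K1 K2 M1 M2 : suppK f K1 -> suppK f K2 -> (K1 <= M1)%N -> (K2 <= M2)%N ->
  zw M1 f = zw M2 f.
Proof.
move=> H1 H2 h1 h2; case: (leqP K1 K2) => hK.
- by rewrite (zw_eqK H1 h1) (@zw_eqK f K1 M2) //; apply: leq_trans h2.
- by rewrite (zw_eqK H2 h2) (@zw_eqK f K2 M1) //; apply: leq_trans h1; apply: ltnW.
Qed.

Lemma zw_shift f K M M' s : suppK f K -> (K + `|s| <= M)%N -> (K <= M')%N ->
  zw M (fun a => f (a + s)) = zw M' f.
Proof.
move=> H h1 h2; rewrite (zw_eqK H h2) /zw.
have -> : isum (- M%:Z) (M + M) (fun a => f (a + s)) = isum (- M%:Z + s) (M + M) f.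
  by apply: eq_bigr => i _; congr f; lia.
apply: isum_win.
- by move=> a [ha|ha]; apply: H; [left|right]; lia.
- by lia.
- by lia.
Qed.

Lemma zwD M f g : zw M (fun a => f a + g a) = zw M f + zw M g.
Proof. by rewrite /zw /isum big_split. Qed.
Lemma zwZ M (x : R[i]) f : zw M (fun a => x *: f a) = x *: zw M f.
Proof. by rewrite /zw /isum scaler_sumr. Qed.
Lemma zwN M f : zw M (fun a => - f a) = - zw M f.
Proof. by rewrite /zw /isum sumrN. Qed.
Lemma zwB M f g : zw M (fun a => f a - g a) = zw M f - zw M g.
Proof. by rewrite zwD zwN. Qed.
Lemma zw_ext M f g : (forall a, f a = g a) -> zw M f = zw M g.
Proof. by move=> H; apply: eq_bigr => i _; apply: H. Qed.
Lemma zw_lin F M f : linP F -> F (zw M f) = zw M (fun a => F (f a)).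
Proof. by move=> H; rewrite /zw /isum linS. Qed.

Lemma zw_delta M (a0 : int) (x : V) : - M%:Z <= a0 -> a0 < M%:Z ->
  zw M (fun a => if a == a0 then x else 0) = x.
Proof.
move=> h1 h2; rewrite /zw /isum.
have hi : (absz (a0 + M%:Z)%R < M + M)%N by lia.
rewrite (bigD1 (Ordinal hi)) //= big1 ?addr0.
  have -> : - M%:Z + (absz (a0 + M%:Z)%R)%:Z = a0 by lia.
  by rewrite eqxx.
move=> i /eqP hne; case: eqP => // e; exfalso; apply: hne.
apply: val_inj => /=; lia.
Qed.

End Gen.

Lemma if_congr_eq (R : realType) (V : lmodType R[i]) (a a0 : int) (b : bool) (x y : V) :
  b = (a == a0) -> (a = a0 -> x = y) ->
  (if b then x else 0) = (if a == a0 then y else 0).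
Proof. by move=> -> H; case: eqP => // /H. Qed.


Section DM.
Variables (R : realType) (V : lmodType R[i]) (d h : int -> V -> V) (c ell : R[i]).
Hypothesis Hmod : is_D_module d h c ell.
Hypothesis Hres : restricted d h.
Hypothesis Hell : ell != 0.

Local Notation hidx := (hidx R).
Lemma dlin m : linP (d m). Proof. by case: Hmod => H _; apply: H. Qed.
Lemma hlin k : linP (h k). Proof. by case: Hmod => _ [H _]; apply: H. Qed.

Lemma two_neq0 : (2%:R : R[i]) != 0. Proof. by rewrite pnatr_eq0. Qed.

Lemma hidx_sum k j : hidx k + hidx j = (k + j + 1)%:~R :> R[i].
Proof.
have e : Defs.half R + Defs.half R = 1 :> R[i].
  by rewrite /Defs.half; field.
rewrite /Defs.hidx !intrD -e; ring.
Qed.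

Lemma hcomm k j v : h k (h j v) =
  h j (h k v) + (if k + j + 1 == 0 then (hidx k * ell) *: v else 0).
Proof.
case: Hmod => _ [_ [_ [_ H]]]; have := H k j v.
rewrite hidx_sum intr_eq0 => /eqP; rewrite subr_eq => /eqP ->.
by rewrite addrC.
Qed.

Lemma dcomm m k v : d m (h k v) = h k (d m v) - hidx k *: h (m + k) v.
Proof.
case: Hmod => _ [_ [_ [H _]]]; have := H m k v.
move=> /eqP; rewrite subr_eq => /eqP ->.
by rewrite scaleNr addrC.
Qed.

Lemma h0 k : h k 0 = 0. Proof. exact: lin0 (hlin k). Qed.
Lemma d0 m : d m 0 = 0. Proof. exact: lin0 (dlin m). Qed.

Definition hb (v : V) (B : int) := forall j, B <= j -> h j v = 0.

Lemma hbound_ok v : hb v (hbound h v).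
Proof.
rewrite /hbound; apply: epsilon_spec.
have [N HN] := Hres v; exists N => j hj; exact: (proj2 (HN j hj)).
Qed.

Lemma hb_mono v B B' : hb v B -> B <= B' -> hb v B'.
Proof. move=> H hB j hj; apply: H; exact: le_trans hB hj. Qed.

Definition Fn (m : int) (v : V) (a : int) := h (m - 1 - a) (h a v).
Definition Nv (v : V) (a : int) :=
  if 0 <= a then h (- a - 1) (h a v) else h a (h (- a - 1) v).

Lemma supp_Fn m v B : m != 0 -> hb v B -> suppK (Fn m v) (`|B| + `|m|).
Proof.
move=> hm H a [ha|ha]; rewrite /Fn.
- rewrite hcomm (H (m - 1 - a)); last by lia.
  rewrite h0 add0r ifF //; apply/negbTE; move: hm; apply: contra => /eqP e.
  apply/eqP; lia.
- by rewrite (H a) ?h0 //; lia.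
Qed.

Lemma supp_Nv v B : hb v B -> suppK (Nv v) `|B|.
Proof.
move=> H a [ha|ha]; rewrite /Nv.
- by rewrite ifF; [rewrite (H (- a - 1)) ?h0 //; lia | apply/negbTE; lia].
- by rewrite ifT; [rewrite (H a) ?h0 //; lia | lia].
Qed.

Lemma Lop_sum_eq (F : int -> V) (M : nat) :
  \sum_(i < (M + M)%N) F (i%:Z - M%:Z) = zw M F.
Proof. by apply: eq_bigr => i _; rewrite addrC. Qed.

Lemma Lop_nz m v B M : m != 0 -> hb v B -> (`|B| + `|m| <= M)%N ->
  Lop h ell m v = (2%:R * ell)^-1 *: zw M (Fn m v).
Proof.
move=> hm H hM; rewrite /Lop hm.
rewrite (Lop_sum_eq (Fn m v)); congr (_ *: _).
exact: (zw_eq (supp_Fn hm (@hbound_ok v)) (supp_Fn hm H)).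
Qed.

Lemma Lop_z v B M : hb v B -> (`|B| <= M)%N ->
  Lop h ell 0 v = (2%:R * ell)^-1 *: zw M (Nv v) + 16%:R^-1 *: v.
Proof.
move=> H hM; rewrite /Lop /=.
rewrite (Lop_sum_eq (Nv v)); congr (_ *: _ + _).
apply: (zw_eq (supp_Nv (@hbound_ok v)) (supp_Nv H)) => //.
by rewrite /win leq_addr.
Qed.

Local Notation L := (Lop h ell).

Lemma hb_d v B n : hb v B -> hb (d n v) (absz B + absz n)%N%:Z.
Proof.
move=> H j hj; have e := dcomm n j v.
have -> : h j (d n v) = d n (h j v) + hidx j *: h (n + j) v by rewrite e subrK.
rewrite (H j) ?(H (n + j)) ?(lin0 (dlin n)) ?scaler0 ?addr0 //; lia.
Qed.

Lemma hb_h v B k : hb v B -> hb (h k v) (absz B + absz k)%N%:Z.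
Proof.
move=> H j hj; rewrite hcomm (H j) ?h0 ?add0r; last by lia.
by rewrite ifF //; apply/negbTE; lia.
Qed.

Lemma hb_comb u w B1 B2 (a : R[i]) : hb u B1 -> hb w B2 ->
  hb (a *: u + w) (absz B1 + absz B2)%N%:Z.
Proof.
move=> H1 H2 j hj; rewrite hlin (H1 j) ?(H2 j) ?scaler0 ?addr0 //; lia.
Qed.

Lemma hhh_comm k p q v : h k (h p (h q v)) - h p (h q (h k v)) =
  (if k + p + 1 == 0 then (hidx k * ell) *: h q v else 0) +
  (if k + q + 1 == 0 then (hidx k * ell) *: h p v else 0).
Proof.
rewrite (hcomm k p (h q v)) (hcomm k q v) (linD (hlin p)).
rewrite addrAC (addrAC (h p (h q (h k v)))) subrr add0r addrC.
by congr (_ + _); case: ifP => _; rewrite ?h0 ?(linZ (hlin p)).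
Qed.

Lemma two_ell : (2%:R * ell)^-1 * (2%:R * ell) = 1.
Proof. by rewrite mulVf // mulf_neq0 // two_neq0. Qed.

Lemma Lop_h p k v : p != 0 -> h k (L p v) - L p (h k v) = hidx k *: h (p + k) v.
Proof.
move=> hp; pose B := hbound h v; have H := @hbound_ok v.
pose M := (absz B + absz k + absz p + 1)%N.
rewrite (Lop_nz hp H (M := M)); last by lia.
rewrite (Lop_nz hp (hb_h (k:=k) H) (M := M)); last by lia.
rewrite (linZ (hlin k)) -scalerBr (zw_lin _ _ (hlin k)) -zwB.
pose X := (hidx k * ell) *: h (p + k) v.
rewrite (zw_ext _ (g := fun a => (if a == k + p then X else 0) + (if a == - k - 1 then X else 0))).
  rewrite zwD !zw_delta; try lia.
  rewrite /X -scalerDl scalerA; congr (_ *: _); rewrite -mulr2n.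
  by rewrite mulr2n; field.
move=> a; rewrite /Fn hhh_comm; congr (_ + _); apply: if_congr_eq.
- by apply/idP/idP => /eqP ?; apply/eqP; lia.
- by move=> ->; rewrite addrC.
- by apply/idP/idP => /eqP ?; apply/eqP; lia.
- by move=> ->; congr (_ *: h _ v); lia.
Qed.

Lemma Lop_h0 k v : h k (L 0 v) - L 0 (h k v) = hidx k *: h k v.
Proof.
pose B := hbound h v; have H := @hbound_ok v.
pose M := (absz B + absz k + 1)%N.
rewrite (Lop_z H (M := M)); last by lia.
rewrite (Lop_z (hb_h (k:=k) H) (M := M)); last by lia.
rewrite (linD (hlin k)) !(linZ (hlin k)) opprD addrACA subrr addr0.
rewrite -scalerBr (zw_lin _ _ (hlin k)) -zwB.
pose X := (hidx k * ell) *: h k v.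
rewrite (zw_ext _ (g := fun a => (if a == k then X else 0) + (if a == - k - 1 then X else 0))).
  rewrite zwD !zw_delta; try lia.
  rewrite /X -scalerDl scalerA; congr (_ *: _); rewrite -mulr2n.
  by rewrite mulr2n; field.
move=> a; rewrite /Nv; case: ifP => ha; rewrite hhh_comm; [|rewrite addrC];
  congr (_ + _); apply: if_congr_eq.
all: try (by apply/idP/idP => /eqP ?; apply/eqP; lia).
all: by move=> ->; congr (_ *: h _ v); lia.
Qed.

Lemma Lop_lin n : linP (L n).
Proof.
move=> a u w; have Hu := @hbound_ok u; have Hw := @hbound_ok w.
have Hc := hb_comb a Hu Hw.
pose M := (absz (hbound h u) + absz (hbound h w) + absz n)%N.
have Fl : forall m x, Fn m (a *: u + w) x = a *: Fn m u x + Fn m w x.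
  by move=> m x; rewrite /Fn (hlin x) (hlin (m - 1 - x)).
have Nl : forall x, Nv (a *: u + w) x = a *: Nv u x + Nv w x.
  by move=> x; rewrite /Nv; case: ifP => _; rewrite !hlin.
case: (eqVneq n 0) => [->|hn].
- rewrite (Lop_z Hu (M := M)); last by lia.
  rewrite (Lop_z Hw (M := M)); last by lia.
  rewrite (Lop_z Hc (M := M)); last by lia.
  rewrite (zw_ext _ Nl) zwD zwZ !scalerDr !scalerA (mulrC a) (mulrC a).
  by rewrite -!addrA; congr (_ + _); rewrite addrCA.
- rewrite (Lop_nz hn Hu (M := M)); last by lia.
  rewrite (Lop_nz hn Hw (M := M)); last by lia.
  rewrite (Lop_nz hn Hc (M := M)); last by lia.
  by rewrite (zw_ext _ (Fl n)) zwD zwZ !scalerDr !scalerA (mulrC a).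
Qed.

Local Notation dp := (dprime d h ell).

Lemma dp_lin p : linP (dp p).
Proof.
move=> a u w; rewrite /dprime (dlin p) (Lop_lin p) scalerBr.
by rewrite opprD !addrA; congr (_ + _); rewrite addrAC.
Qed.

Lemma Lop_hc p k v : L p (h k v) = h k (L p v) - hidx k *: h (p + k) v.
Proof.
case: (eqVneq p 0) => [->|hp].
- by rewrite add0r -(Lop_h0 k v) opprB addrC subrK.
- by rewrite -(Lop_h k v hp) opprB addrC subrK.
Qed.

Lemma dp_h p k v : dp p (h k v) = h k (dp p v).
Proof.
rewrite /dprime dcomm Lop_hc (linB (hlin k)).
by rewrite opprB addrA subrK.
Qed.

Lemma hb_dp p v B : hb v B -> hb (dp p v) B.
Proof. by move=> H j hj; rewrite -dp_h (H j hj) (lin0 (dp_lin p)). Qed.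

Lemma dp_L p n v : dp p (L n v) = L n (dp p v).
Proof.
have H := @hbound_ok v; have H' := hb_dp p H.
pose M := (absz (hbound h v) + absz n)%N.
have dl := dp_lin p.
case: (eqVneq n 0) => [->|hn].
- rewrite (Lop_z H (M := M)); last by lia.
  rewrite (Lop_z H' (M := M)); last by lia.
  rewrite (linD dl) !(linZ dl) (zw_lin _ _ dl); congr (_ *: _ + _).
  by apply: zw_ext => a; rewrite /Nv; case: ifP => _; rewrite !dp_h.
- rewrite (Lop_nz hn H (M := M)); last by lia.
  rewrite (Lop_nz hn H' (M := M)); last by lia.
  rewrite !(linZ dl) (zw_lin _ _ dl); congr (_ *: _).
  by apply: zw_ext => a; rewrite /Fn !dp_h.
Qed.

Lemma dhh n p q v : d n (h p (h q v)) =
  h p (h q (d n v)) - hidx q *: h p (h (n + q) v) - hidx p *: h (n + p) (h q v).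
Proof. by rewrite dcomm dcomm (linB (hlin p)) (linZ (hlin p)). Qed.

Lemma xpqx (x p q : V) : x - p - q - x = - (p + q).
Proof. by rewrite addrAC (addrAC x) subrr add0r opprD. Qed.

Lemma d_L n m v : m != 0 -> n + m != 0 ->
  d n (L m v) - L m (d n v) = (n - m)%:~R *: L (n + m) v.
Proof.
move=> hm hnm; have H := @hbound_ok v; have Hd := hb_d (n:=n) H.
pose M := (absz (hbound h v) + absz n + absz m + absz (n + m)%R)%N.
rewrite (Lop_nz hm H (M := M)); last by lia.
rewrite (Lop_nz hm Hd (M := M)); last by lia.
rewrite (Lop_nz hnm H (M := M)); last by lia.
pose G := Fn (n + m) v.
pose f := fun b => hidx (b - n) *: G b.
rewrite (linZ (dlin n)) -scalerBr (zw_lin _ _ (dlin n)) -zwB.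
rewrite (zw_ext _ (g := fun a => - (f (a + n) + hidx (m - 1 - a) *: G a))); last first.
  move=> a; rewrite /Fn dhh /f /G xpqx; congr (- (_ + _)).
  - by congr (hidx _ *: h _ (h _ v)); lia.
  - by congr (_ *: h _ _); lia.
have Sf : suppK f (absz (hbound h v) + absz (n + m)%R).
  by move=> b hb'; rewrite /f /G (supp_Fn hnm H hb') scaler0.
rewrite zwN zwD (zw_shift Sf (M' := M)); [|lia|lia].
rewrite -zwD.
rewrite (zw_ext _ (g := fun b => (m - n)%:~R *: G b)); last first.
  by move=> b; rewrite /f -scalerDl hidx_sum; congr (_%:~R *: _); lia.
rewrite zwZ scalerN !scalerA -scaleNr; congr (_ *: _).
by rewrite -mulrN -intrN opprB mulrC.
Qed.

Lemma P_Nv k v : h k (h (-1 - k) v) =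
  Nv v k + (if 0 <= k then hidx k * ell else 0) *: v.
Proof.
rewrite /Nv; case: ifP => hk.
- rewrite hcomm ifT; last by apply/eqP; lia.
  by congr (h _ _ + _); lia.
- by rewrite scale0r addr0; congr (h _ (h _ v)); lia.
Qed.

Lemma Nv_sym v k : Nv v (-1 - k) = Nv v k.
Proof.
rewrite /Nv; case: ifP => h1; case: ifP => h2.
- lia.
- by congr (h _ (h _ v)); lia.
- by congr (h _ (h _ v)); lia.
- lia.
Qed.

Lemma sc_case (a : int) (v : V) :
  (- (hidx a * (if 0 <= -3 - a then hidx (-3 - a) * ell else 0) +
      hidx (-3 - a) * (if 0 <= -1 - a then hidx (-1 - a) * ell else 0))) *: v =
  (if a == -2 then ((3%:R / 4%:R) * ell) *: v else 0) +
  (if a == -1 then ((3%:R / 4%:R) * ell) *: v else 0).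
Proof.
rewrite /Defs.hidx /Defs.half.
have : a <= -3 \/ a = -2 \/ a = -1 \/ 0 <= a by lia.
case=> [ha|[ha|[ha|ha]]]; [ | subst a | subst a | ].
- rewrite ifT; last by lia.
  rewrite ifT; last by lia.
  rewrite ifF; last by apply/negbTE; lia.
  rewrite ifF; last by apply/negbTE; lia.
  rewrite addr0; apply/eqP; rewrite scaler_eq0; apply/orP; left; apply/eqP.
  by field.
- by rewrite /= addr0; congr (_ *: _); field.
- by rewrite /= [RHS]add0r; congr (_ *: _); field.
- have -> : (0 <= -3 - a) = false by apply/negbTE; lia.
  have -> : (0 <= -1 - a) = false by apply/negbTE; lia.
  have -> : (a == -2) = false by apply/negbTE; lia.
  have -> : (a == -1) = false by apply/negbTE; lia.
  by rewrite !mulr0 addr0 oppr0 scale0r addr0.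
Qed.

Lemma rearr (s t c1 c2 : R[i]) (N1 N2 v : V) :
  - (s *: (N1 + c1 *: v) + t *: (N2 + c2 *: v)) =
  - (s *: N1 + t *: N2) + (- (s * c1 + t * c2)) *: v.
Proof. by rewrite !scalerDr !scalerA addrACA opprD scaleNr scalerDl. Qed.

Lemma d_L22 v : d 2 (L (-2) v) - L (-2) (d 2 v) = 4%:R *: L 0 v + 2^-1 *: v.
Proof.
have H := @hbound_ok v; have Hd := hb_d (n:=2) H.
have hm : (-2 : int) != 0 by [].
pose M := (absz (hbound h v) + 7)%N.
rewrite (Lop_nz hm H (M := M)); last by lia.
rewrite (Lop_nz hm Hd (M := M)); last by lia.
rewrite (Lop_z H (M := M)); last by lia.
rewrite (linZ (dlin 2)) -scalerBr (zw_lin _ _ (dlin 2)) -zwB.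
pose f := fun b => hidx (b - 2) *: Nv v b.
pose Y := ((3%:R / 4%:R) * ell) *: v.
rewrite (zw_ext _ (g := fun a => - (f (a + 2) + hidx (-3 - a) *: Nv v a) +
   ((if a == -2 then Y else 0) + (if a == -1 then Y else 0)))); last first.
  move=> a; rewrite /Fn dhh xpqx.
  have E1 : h (-2 - 1 - a) (h (2 + a) v) =
      Nv v (a + 2) + (if 0 <= -3 - a then hidx (-3 - a) * ell else 0) *: v.
    have -> : -2 - 1 - a = -3 - a by lia.
    have -> : 2 + a = -1 - (-3 - a) by lia.
    rewrite P_Nv; congr (_ + _); rewrite -(@Nv_sym v (a + 2)); congr Nv; lia.
  have E2 : h (2 + (-2 - 1 - a)) (h a v) =
      Nv v a + (if 0 <= -1 - a then hidx (-1 - a) * ell else 0) *: v.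
    have -> : 2 + (-2 - 1 - a) = -1 - a by lia.
    have := P_Nv (-1 - a) v; have -> : -1 - (-1 - a) = a by lia.
    by move=> ->; rewrite (@Nv_sym v a).
  rewrite E1 E2 (_ : -2 - 1 - a = -3 - a); last by lia.
  rewrite rearr /Y -sc_case /f (_ : a + 2 - 2 = a) //; lia.
have Sf : suppK f (absz (hbound h v)).
  by move=> b hb'; rewrite /f (supp_Nv H hb') scaler0.
rewrite zwD zwN zwD (zw_shift Sf (M' := M)); [|lia|lia].
rewrite -zwD.
rewrite (zw_ext _ (g := fun b => (-4)%:~R *: Nv v b)); last first.
  by move=> b; rewrite /f -scalerDl hidx_sum; congr (_%:~R *: _); lia.
rewrite zwZ zwD !zw_delta; [|lia|lia|lia|lia].
set Z := zw M (Nv v).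
have eL : (2%:R * ell)^-1 *: (- ((-4)%:~R *: Z) + (Y + Y)) =
   ((2%:R * ell)^-1 * - (-4)%:~R) *: Z +
   ((2%:R * ell)^-1 * ((3%:R / 4%:R) * ell + (3%:R / 4%:R) * ell)) *: v.
  by rewrite /Y -scaleNr -scalerDl scalerDr !scalerA.
have eR : 4%:R *: ((2%:R * ell)^-1 *: Z + 16%:R^-1 *: v) + 2^-1 *: v =
   (4%:R * (2%:R * ell)^-1) *: Z + (4%:R * 16%:R^-1 + 2^-1) *: v.
  by rewrite scalerDr !scalerA scalerDl addrA.
rewrite eL eR; congr (_ *: _ + _ *: _).
- by field.
- by field.
Qed.

Lemma vAB (a b x y : V) : (a - x) - (b - y) = (a - b) + (y - x).
Proof. by rewrite opprB addrACA [RHS]addrACA (addrC (- x)). Qed.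

Lemma dp_bracket m n v : m != 0 -> n + m != 0 ->
  dp m (dp n v) - dp n (dp m v) = (m - n)%:~R *: dp (m + n) v.
Proof.
move=> hm hnm.
have e1 : dp m (dp n v) = dp m (d n v) - L n (dp m v).
  by rewrite [dp n v]/dprime (linB (dp_lin m)) dp_L.
have e2 : dp n (dp m v) = d n (dp m v) - L n (dp m v) by [].
rewrite e1 e2 opprB addrA subrK.
have e3 : dp m (d n v) = d m (d n v) - L m (d n v) by [].
have e4 : d n (dp m v) = d n (d m v) - d n (L m v) by rewrite /dprime (linB (dlin n)).
rewrite e3 e4 vAB d_L //.
case: Hmod => _ [_ [Hdd _]]; rewrite Hdd ifF; last first.
  by apply/negbTE; move: hnm; apply: contra => /eqP e; apply/eqP; lia.
rewrite addr0 (addrC n m) /dprime scalerBr; congr (_ + _).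
by rewrite -opprB intrN scaleNr.
Qed.

Lemma sub_sum (W : V -> Prop) N (F : 'I_N -> V) : subspace W ->
  (forall i, W (F i)) -> W (\sum_(i < N) F i).
Proof.
move=> [W0 Wc] HF; elim/big_rec: _ => // i x _ Wx.
by rewrite -[F i]scale1r; apply: Wc.
Qed.

Lemma sub_scale (W : V -> Prop) a u : subspace W -> W u -> W (a *: u).
Proof. by move=> [W0 Wc] Wu; rewrite -[a *: u]addr0; apply: Wc. Qed.

Lemma sub_add (W : V -> Prop) u w : subspace W -> W u -> W w -> W (u + w).
Proof. by move=> [W0 Wc] Wu Ww; rewrite -[u]scale1r; apply: Wc. Qed.

Lemma Lop_stable (W : V -> Prop) : subspace W -> (forall k u, W u -> W (h k u)) ->
  forall n u, W u -> W (L n u).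
Proof.
move=> Ws Wh n u Wu; rewrite /Lop; case: ifP => _.
- apply: sub_scale => //; apply: sub_sum; first exact: Ws.
  by move=> i; apply Wh; apply Wh.
- apply: sub_add => //; last exact: sub_scale.
  apply: sub_scale => //; apply: sub_sum; first exact: Ws.
  by move=> i /=; case: ifP => _; apply Wh; apply Wh.
Qed.

Lemma oppXw (X w : V) (a b : R[i]) : - (X + a *: w) - (- X + b *: w) = - ((a + b) *: w).
Proof. by rewrite !opprD opprK addrACA addNr add0r scalerDl opprD. Qed.

Lemma main (nS mS : int) : simple_D d h ->
  (forall n, exists v, Yn d h ell nS mS n v /\ v <> 0) ->
  c = 1 /\ (forall v, Kmod d h ell nS mS v) /\ (forall n v, d n v = Lop h ell n v) /\
  simple_h h (Kmod d h ell nS mS).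
Proof.
move=> [[v1 hv1] Hsimp] HY.
have [v0 [[Hu0 Hp0] hv0]] := HY (-2).
have Hk : forall k : nat, dp (-2 - k%:Z) v0 = 0.
  elim=> [|k IH]; first by apply: Hp0; lia.
  have := dp_bracket (m := -1) (n := -2 - k%:Z) v0 isT.
  have hnm : (-2 - k%:Z + -1 != 0) by apply/negP => /eqP; lia.
  move=> /(_ hnm); rewrite IH (Hp0 (-1)) //.
  rewrite !(lin0 (dp_lin _)) subrr => /esym /eqP; rewrite scaler_eq0 => /orP [|/eqP].
    by rewrite intr_eq0 => /eqP; lia.
  by have -> : -1 + (-2 - k%:Z) = -2 - k.+1%:Z by lia.
have K0v0 : K0 d h ell nS mS v0.
  split => // p; case: (lerP (-2) p) => hp; first exact: Hp0.
  have := Hk (absz (-2 - p)%R); have -> // : -2 - (absz (-2 - p)%R)%:Z = p by lia.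
pose W := fun v => forall p, dp p v = 0.
have Wsub : subspace W.
  split; first by move=> p; rewrite (lin0 (dp_lin p)).
  by move=> a u w Hu Hw p; rewrite dp_lin Hu Hw scaler0 addr0.
have Wh : forall k v, W v -> W (h k v).
  by move=> k v Wv p; rewrite dp_h Wv h0.
have Wd : forall n v, W v -> W (d n v).
  move=> n v Wv p.
  have -> : d n v = L n v by apply/eqP; rewrite -subr_eq0; apply/eqP; exact: Wv.
  by rewrite dp_L Wv (lin0 (Lop_lin n)).
have dL : forall n v, d n v = L n v.
  case: (Hsimp W Wsub Wd Wh) => [H0|Hall].
    by exfalso; apply: hv0; apply: H0; case: K0v0.
  by move=> n v; apply/eqP; rewrite -subr_eq0; apply/eqP; exact: Hall.
have Kd : forall W', subspace W' -> (forall k u, W' u -> W' (h k u)) ->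
    forall n u, W' u -> W' (d n u).
  by move=> W' Ws Wh' n u Wu; rewrite dL; apply: Lop_stable.
have Ksub : subspace (Kmod d h ell nS mS).
  split; first by move=> W' [W0 _] _ _.
  move=> a u w Ku Kw W' Ws Wh' HK; case: (Ws) => _ Wc.
  by apply: Wc; [apply: Ku | apply: Kw].
have Kh : forall k u, Kmod d h ell nS mS u -> Kmod d h ell nS mS (h k u).
  by move=> k u Ku W' Ws Wh' HK; apply Wh'; apply Ku.
have Kv0 : Kmod d h ell nS mS v0 by move=> W' _ _ HK; apply: HK.
have Kall : forall v, Kmod d h ell nS mS v.
  case: (Hsimp _ Ksub (Kd _ Ksub Kh) Kh) => [H0|] //.
  by exfalso; apply: hv0; apply: H0.
split; last first.
  split; first exact: Kall.
  split; first exact: dL.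
  split; first exact: Ksub.
  split; first exact: Kh.
  split; first by exists v0.
  move=> W' Ws Wsubs Wh'.
  case: (Hsimp W' Ws (Kd W' Ws Wh') Wh') => [H0|Hall]; first by left.
  by right => v _; apply: Hall.
case: Hmod => _ [_ [Hdd _]]; have := Hdd (-2) 2 v1.
rewrite (dL (-2) (d 2 v1)) (dL (-2) v1).
have -> : L (-2) (d 2 v1) - d 2 (L (-2) v1) = - (d 2 (L (-2) v1) - L (-2) (d 2 v1)).
  by rewrite opprB.
rewrite d_L22 (_ : (-2 + 2 : int) = 0) // eqxx dL.
have -> : (-2 - 2)%:~R *: L 0 v1 = - (4%:R *: L 0 v1).
  by rewrite -scaleNr; congr (_ *: _); ring.
have -> : ((-2) ^+ 3 - -2)%:~R / 12%:R = - 2^-1 :> R[i] by field.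
move=> /eqP; rewrite -subr_eq0 oppXw oppr_eq0 scaler_eq0 (negbTE (introN eqP hv1)) orbF.
move=> /eqP e.
have : c - 1 = - 2%:R * (2^-1 + - 2^-1 * c) by field.
by rewrite e mulr0 => /eqP; rewrite subr_eq0 => /eqP.
Qed.

End DM.

Unset Implicit Arguments.

Theorem proposition4p4 (R : realType) (V : lmodType R[i])
    (d h : int -> V -> V) (c ell : R[i]) (nS mS : int) :
  is_D_module d h c ell ->
  restricted d h ->
  simple_D d h ->
  ell != 0 ->
  (* n_S = min { r in Z : S(r) <> 0 } *)
  (exists v, Sr h nS v /\ v <> 0) ->
  (forall r, r < nS -> forall v, Sr h r v -> v = 0) ->
  (* m_S = min { r in Z : U(r) <> 0 } *)
  (exists v, Ur d h nS mS v /\ v <> 0) ->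
  (forall r, r < mS -> forall v, Ur d h nS r v -> v = 0) ->
  (* m_S = 2 n_S > 0 *)
  mS = 2%:Z * nS -> 0 < mS ->
  (* r_S = -oo : Y_n <> 0 for every n *)
  (forall n, exists v, Yn d h ell nS mS n v /\ v <> 0) ->
  c = 1 /\
  (forall v, Kmod d h ell nS mS v) /\
  (forall n v, d n v = Lop h ell n v) /\
  simple_h h (Kmod d h ell nS mS).
Proof.
move=> Hmod Hres Hsimp Hell _ _ _ _ _ _ HY.
exact: (@main R V d h c ell Hmod Hres Hell nS mS Hsimp HY).
Qed.
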